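(* If $\sum_{i=1}^M b_i<1$, then for every $\epsilon>0$ the energy-scarce solution $\mathbf r^\star$ is feasible for Problem 1, i.e. $r^\star_l>0$ and $\sigma_l(\mathbf r^\star)\le b_l$ for all $l$.
   Context: Fix an integer $M\ge1$, weights $w_1,\dots,w_M>0$, constants $b_1,\dots,b_M>0$, and $\epsilon>0$. For $\mathbf r\in(0,\infty)^M$ write $S(\mathbf r)=\sum_{i=1}^M r_i$ and define $$\sigma_l(\mathbf r)=\frac{(1-e^{-r_l\epsilon})S(\mathbf r)+r_le^{-r_l\epsilon}}{S(\mathbf r)+1}.$$ Problem 1's constraint set is $\{\mathbf r\in(0,\infty)^M:\sigma_l(\mathbf r)\le b_l\ \forall l\}$. Energy-scarce solution (when $B:=\sum_i b_i<1$): for each $l$ let $$c_l=\frac{2b_l(1-B)^2}{b_l(1-B)^2+\sqrt{b_l^2(1-B)^4+4b_l^2(1-B)^2(B-b_l)\epsilon}},$$ let $x^\star=\frac{\min_l c_l}{1-B}$, $\beta^\star=\sum_{i=1}^M \frac{1}{\sqrt{w_i}}$, and set $r^\star_l=\min\{b_l,\beta^\star\sqrt{w_l}\}\,x^\star$. *)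

(* Defs.v *)
(* real analysis (exp, sqrt). Indices l = 0..M-1 (paper: 1..M). *)
From Stdlib Require Import Reals Lra.
Open Scope R_scope.

Fixpoint sumM (M : nat) (f : nat -> R) : R :=
  match M with O => 0 | S k => sumM k f + f k end.

Fixpoint minM (M : nat) (f : nat -> R) : R :=
  match M with
  | O => f O
  | S O => f O
  | S k => Rmin (minM k f) (f k)
  end.

Definition S_tot (M : nat) (r : nat -> R) : R := sumM M r.

Definition sigma_l (M : nat) (eps : R) (r : nat -> R) (l : nat) : R :=
  ((1 - exp (- (r l * eps))) * S_tot M r + r l * exp (- (r l * eps)))
  / (S_tot M r + 1).

Definition c_l (M : nat) (b : nat -> R) (eps : R) (l : nat) : R :=
  let B := sumM M b in
  2 * b l * (1 - B)^2 /
  (b l * (1 - B)^2 +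
   sqrt (b l ^ 2 * (1 - B)^4 + 4 * b l ^ 2 * (1 - B)^2 * (B - b l) * eps)).

Definition x_star (M : nat) (b : nat -> R) (eps : R) : R :=
  minM M (c_l M b eps) / (1 - sumM M b).

Definition beta_star (M : nat) (w : nat -> R) : R :=
  sumM M (fun i => 1 / sqrt (w i)).

Definition r_star (M : nat) (w b : nat -> R) (eps : R) (l : nat) : R :=
  Rmin (b l) (beta_star M w * sqrt (w l)) * x_star M b eps.

(* Main.v *)
Require Import Defs.
From Stdlib Require Import Reals Lra Lia Psatz.
Open Scope R_scope.

Lemma sumM_ext M f g : (forall i, (i < M)%nat -> f i = g i) -> sumM M f = sumM M g.
Proof.
  induction M as [|k IH]; intros H; simpl; [reflexivity|].
  rewrite IH by (intros; apply H; lia). rewrite (H k) by lia. reflexivity.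
Qed.

Lemma sumM_scal M f x : sumM M (fun i => f i * x) = sumM M f * x.
Proof. induction M; simpl; [ring| rewrite IHM; ring]. Qed.

Lemma sumM_nonneg M f : (forall i, (i < M)%nat -> 0 <= f i) -> 0 <= sumM M f.
Proof.
  induction M as [|k IH]; intros H; simpl; [lra|].
  assert (0 <= sumM k f) by (apply IH; intros; apply H; lia).
  assert (0 <= f k) by (apply H; lia). lra.
Qed.

Lemma sumM_le M f l : (forall i, (i < M)%nat -> 0 <= f i) -> (l < M)%nat -> f l <= sumM M f.
Proof.
  induction M as [|k IH]; intros H Hl; simpl; [lia|].
  assert (0 <= sumM k f) by (apply sumM_nonneg; intros; apply H; lia).
  destruct (Nat.eq_dec l k) as [->|Hne].
  - lra.
  - assert (f l <= sumM k f) by (apply IH; [intros; apply H; lia| lia]).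
    assert (0 <= f k) by (apply H; lia). lra.
Qed.

Lemma minM_le M f l : (l < M)%nat -> minM M f <= f l.
Proof.
  induction M as [|k IH]; intros Hl; [lia|].
  destruct k as [|k'].
  - simpl. assert (l = O) by lia. subst; lra.
  - change (minM (S (S k')) f) with (Rmin (minM (S k') f) (f (S k'))).
    destruct (Nat.eq_dec l (S k')) as [->|Hne].
    + apply Rmin_r.
    + eapply Rle_trans; [apply Rmin_l| apply IH; lia].
Qed.

Lemma minM_pos M f : (1 <= M)%nat -> (forall i, (i < M)%nat -> 0 < f i) -> 0 < minM M f.
Proof.
  induction M as [|k IH]; intros H1 H; [lia|].
  destruct k as [|k'].
  - simpl. apply H; lia.
  - change (minM (S (S k')) f) with (Rmin (minM (S k') f) (f (S k'))).
    apply Rmin_pos; [apply IH; [lia| intros; apply H; lia] | apply H; lia].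
Qed.

Lemma c_pos_and_eq (b B eps : R) : 0 < b -> b <= B -> B < 1 -> 0 < eps ->
  let D := 1 - B in
  let c := 2 * b * D^2 / (b * D^2 + sqrt (b ^ 2 * D^4 + 4 * b ^ 2 * D^2 * (B - b) * eps)) in
  0 < c /\ D^2 * c + eps * (B - b) * c^2 = D^2.
Proof.
  intros hb hbB hB he D c.
  assert (hD : 0 < D) by (unfold D; lra).
  set (q := b ^ 2 * D^4 + 4 * b ^ 2 * D^2 * (B - b) * eps).
  assert (hq : 0 <= q).
  { unfold q. assert (0 <= 4 * b ^ 2 * D^2 * (B - b) * eps).
    { repeat apply Rmult_le_pos; try lra; apply pow_le; lra. }
    assert (0 <= b^2 * D^4) by (apply Rmult_le_pos; apply pow_le; lra). lra. }
  set (s := sqrt q).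
  assert (hs0 : 0 <= s) by apply sqrt_pos.
  assert (hss : s * s = q) by (apply sqrt_sqrt; exact hq).
  set (K := b * D^2).
  assert (hK : 0 < K) by (unfold K; apply Rmult_lt_0_compat; [lra| apply pow_lt; lra]).
  assert (hu : 0 < K + s) by lra.
  assert (hcu : c * (K + s) = 2 * K).
  { unfold c. fold q. fold s. fold K. unfold Rdiv. rewrite Rmult_assoc, Rinv_l by lra. unfold K. ring. }
  split.
  - unfold c. fold q. fold s. fold K. apply Rdiv_lt_0_compat; [apply Rmult_lt_0_compat; [lra| apply pow_lt; lra] | lra].
  - assert (hz : (D^2 * c + eps * (B - b) * c^2 - D^2) * ((K+s)*(K+s)) = 0).
    { replace ((D^2 * c + eps * (B - b) * c^2 - D^2) * ((K+s)*(K+s)))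
        with (D^2 * (c*(K+s)) * (K+s) + eps*(B-b)*(c*(K+s))^2 - D^2*(K+s)*(K+s)) by ring.
      rewrite hcu. unfold K.
      replace (D ^ 2 * (2 * (b * D ^ 2)) * (b * D ^ 2 + s) +
        eps * (B - b) * (2 * (b * D ^ 2)) ^ 2 -
        D ^ 2 * (b * D ^ 2 + s) * (b * D ^ 2 + s))
        with (D^2 * (q - s * s)) by (unfold q; ring).
      rewrite hss. ring. }
    apply Rmult_integral in hz. destruct hz as [hz|hz]; [lra| nra].
Qed.

Theorem lemma4 (M : nat) (w b : nat -> R) (eps : R)
  (hM : (1 <= M)%nat)
  (hw : forall i, (i < M)%nat -> 0 < w i)
  (hb : forall i, (i < M)%nat -> 0 < b i)
  (heps : 0 < eps)
  (hB : sumM M b < 1) :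
  forall l, (l < M)%nat ->
    0 < r_star M w b eps l /\
    sigma_l M eps (r_star M w b eps) l <= b l.
Proof.
  intros l hl.
  set (B := sumM M b).
  set (x := x_star M b eps).
  assert (hbB : forall i, (i < M)%nat -> b i <= B).
  { intros i hi. apply sumM_le; [intros; left; apply hb; auto| auto]. }
  assert (hbl1 : forall i, (i < M)%nat -> b i < 1).
  { intros i hi. specialize (hbB i hi). unfold B in *. lra. }
  assert (hr : forall i, (i < M)%nat -> r_star M w b eps i = b i * x).
  { intros i hi. unfold r_star. fold x. rewrite Rmin_left; [reflexivity|].
    assert (hsw : 0 < sqrt (w i)) by (apply sqrt_lt_R0; apply hw; auto).
    assert (1 / sqrt (w i) <= beta_star M w).
    { unfold beta_star. apply (sumM_le M (fun i => 1 / sqrt (w i))); auto.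
      intros j hj. left. apply Rdiv_lt_0_compat; [lra| apply sqrt_lt_R0; apply hw; auto]. }
    assert (1 <= beta_star M w * sqrt (w i)).
    { replace 1 with (1 / sqrt (w i) * sqrt (w i)) by (field; lra).
      apply Rmult_le_compat_r; lra. }
    specialize (hbl1 i hi). lra. }
  assert (hcl : forall i, (i < M)%nat -> 0 < c_l M b eps i /\
     (1-B)^2 * c_l M b eps i + eps * (B - b i) * (c_l M b eps i)^2 = (1-B)^2).
  { intros i hi. unfold c_l. fold B. apply c_pos_and_eq; auto. }
  set (y := minM M (c_l M b eps)).
  assert (hy0 : 0 < y) by (apply minM_pos; auto; intros; apply hcl; auto).
  assert (hyc : y <= c_l M b eps l) by (apply minM_le; auto).
  assert (hD : 0 < 1 - B) by (unfold B; lra).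
  assert (hx : x = y / (1 - B)) by reflexivity.
  assert (hx0 : 0 < x) by (rewrite hx; apply Rdiv_lt_0_compat; lra).
  assert (hbl := hb l hl). assert (hbBl := hbB l hl).
  rewrite (hr l hl). split; [apply Rmult_lt_0_compat; lra|].
  unfold sigma_l, S_tot.
  rewrite (sumM_ext M (r_star M w b eps) (fun i => b i * x)) by auto.
  rewrite sumM_scal. fold B. rewrite (hr l hl).
  set (e := exp (- (b l * x * eps))).
  assert (he : 1 - e <= b l * x * eps).
  { pose proof (exp_ineq1_le (- (b l * x * eps))). unfold e. lra. }
  assert (hBx : 0 <= B * x) by nra.
  apply Rle_trans with (b l * (B * x + 1) / (B * x + 1)); [| right; field; lra].
  apply Rmult_le_compat_r; [left; apply Rinv_0_lt_compat; lra|].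
  destruct (hcl l hl) as [hc0 hceq].
  set (c := c_l M b eps l) in *.
  set (D := 1 - B) in *.
  assert (hkey : D^2 * y + eps * (B - b l) * y^2 <= D^2).
  { assert (eps * (B - b l) * y^2 <= eps * (B - b l) * c^2).
    { apply Rmult_le_compat_l; [nra|]. nra. }
    nra. }
  assert (hy : y = x * D) by (rewrite hx; field; lra).
  rewrite hy in hkey.
  assert (hk2 : x * D + eps * (B - b l) * x^2 <= 1).
  { assert (D^2 * (x * D + eps * (B - b l) * x^2) <= D^2 * 1) by nra.
    apply Rmult_le_reg_l with (D^2); [nra| lra]. }
  (* (1-e)Bx + bx e = (1-e)(B-b)x + bx *)
  assert (h1 : (1 - e) * ((B - b l) * x) <= b l * x * eps * ((B - b l) * x)).
  { apply Rmult_le_compat_r; [nra| exact he]. }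
  unfold D in hk2. nra.
Qed.
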